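(* Under the standing setup and with $u$, $z^*$, $r_u$, $\delta_v$, $z_v$ as in the context, assume $\beta(u)\ne0$ and let $v\in B(u,r_u)\cap\widetilde X$ satisfy $\|u-v\|\le\frac{\varepsilon\|\beta(u)\|}{480}$. Then \[\|z_v-\beta(v)\|\le\frac{128\|u-u_{NN}\|^{1/2}}{\varepsilon^{1/2}}\|u-v\|^{1/2}.\]
   Context: Norms are Euclidean; $B(x,r)$ is the open ball. Standing setup: $X\subseteq\mathbb{R}^d$ has reach $\tau_X>0$, where $\tau_X=\sup\{t\ge0:\text{every }x\text{ with }d(x,X)<t\text{ has a unique closest point in }\overline X\}$; $\widetilde X=X+B(0,\tau_X/2)$; for $u\in\widetilde X$, $u_{NN}$ is the unique closest point to $u$ in $\overline X$, and it is a known fact that $\|u_{NN}-v_{NN}\|\le2\|u-v\|$ for all $u,v\in\widetilde X$. $\varepsilon\in(0,1)$. $S_X=\overline{\{(x-y)/\|x-y\|:x\ne y\in X\}}$. A linear $\Pi$ provides $\eta$-convex hull distortion for $T\subseteq S^{d-1}$ if $|\,\|\Pi x\|-\|x\|\,|<\eta$ for all $x\in\operatorname{conv}(T)$. $\mathcal C=\{w_1,\ldots,w_\ell\}\subseteq S_X$ is finite with every $v\in S_X$ within distance $<\varepsilon/40$ of some $w_i$; $\Pi\in\mathbb{R}^{m\times d}$ provides $\frac{\varepsilon}{240}$-convex hull distortion for $S_X$. For $z\in\mathbb{R}^m$, $u\in\widetilde X$, $i=1,\ldots,\ell$: $\tilde g_i(z,u)=\langle z,\Pi w_i\rangle-\langle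 u-u_{NN},w_i\rangle-\frac{\varepsilon}{30}\|u-u_{NN}\|$, $\tilde g_{\ell+i}(z,u)=\langle u-u_{NN},w_i\rangle-\langle z,\Pi w_i\rangle-\frac{\varepsilon}{30}\|u-u_{NN}\|$; $\widetilde F_u=\{z:\tilde g_i(z,u)\le0\ \forall i\}$; $\beta(u)=\arg\min_{z\in\widetilde F_u}\|z\|$. Fix $u\in\widetilde X\setminus\overline X$ and $z^*\in\mathbb{R}^m$ with $\|z^*\|\le\|u-u_{NN}\|$ and $\tilde g_i(z^*,u)\le-\frac{\varepsilon}{60}\|u-u_{NN}\|$ for all $i$. Set $r_u=\min\{1,\frac{\varepsilon\|u-u_{NN}\|}{480}\}$, and for $v\in B(u,r_u)\cap\widetilde X$, $\delta_v=\frac{240\|u-v\|}{\varepsilon\|u-u_{NN}\|}$, $z_v=(1-\delta_v)\beta(u)+\delta_vz^*$. *)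

(* Defs.v *)
From HB Require Import structures.
From mathcomp Require Import all_boot all_order all_algebra.
From mathcomp Require Import all_classical all_reals all_analysis.
Set Implicit Arguments. Unset Strict Implicit. Unset Printing Implicit Defensive.
Import Order.TTheory GRing.Theory Num.Theory.
Local Open Scope classical_set_scope.
Local Open Scope ring_scope.

Definition dotv {R : realType} {d : nat} (x y : 'rV[R]_d) : R :=
  \sum_(i < d) x 0 i * y 0 i.
Definition enorm {R : realType} {d : nat} (x : 'rV[R]_d) : R := Num.sqrt (dotv x x).

Definition eclosure {R : realType} {d : nat} (A : set 'rV[R]_d) : set 'rV[R]_d :=
  [set p | forall e : R, 0 < e -> exists2 y, A y & enorm (p - y) < e].

(* d(x, A) = inf_{y in A} |x - y| (as an extended real; +oo if A is empty) *)
Definition setdist {R : realType} {d : nat} (x : 'rV[R]_d) (A : set 'rV[R]_d) : \bar R :=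
  ereal_inf [set (enorm (x - y))%:E | y in A].

Definition is_nearest {R : realType} {d : nat} (A : set 'rV[R]_d) (x p : 'rV[R]_d) : Prop :=
  eclosure A p /\ forall q, eclosure A q -> enorm (x - p) <= enorm (x - q).

Definition unique_nearest {R : realType} {d : nat} (A : set 'rV[R]_d) (x : 'rV[R]_d) : Prop :=
  exists! p, is_nearest A x p.

Definition reach {R : realType} {d : nat} (A : set 'rV[R]_d) : \bar R :=
  ereal_sup [set t%:E | t in [set t : R | 0 <= t /\
     forall x, (setdist x A < t%:E)%E -> unique_nearest A x]].

Definition tube {R : realType} {d : nat} (A : set 'rV[R]_d) : set 'rV[R]_d :=
  [set u | exists2 x, A x & ((enorm (u - x))%:E < reach A * (2^-1)%:E)%E].

(* u_NN : the (unique, for u in the tube) closest point to u in cl A *)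
Definition NN {R : realType} {d : nat} (A : set 'rV[R]_d) (u : 'rV[R]_d) : 'rV[R]_d :=
  xget 0 (is_nearest A u).

Definition unit_secants {R : realType} {d : nat} (A : set 'rV[R]_d) : set 'rV[R]_d :=
  eclosure [set s | exists x y, [/\ A x, A y, x <> y & s = (enorm (x - y))^-1 *: (x - y)]].

Definition conv {R : realType} {d : nat} (T : set 'rV[R]_d) : set 'rV[R]_d :=
  [set x | exists n (lam : 'I_n -> R) (t : 'I_n -> 'rV[R]_d),
     [/\ forall i, 0 <= lam i, \sum_(i < n) lam i = 1, forall i, T (t i)
       & x = \sum_(i < n) lam i *: t i]].

Definition Papp {R : realType} {m d : nat} (P : 'M[R]_(m, d)) (x : 'rV[R]_d) : 'rV[R]_m :=
  x *m P^T.

Definition hull_distortion {R : realType} {m d : nat} (P : 'M[R]_(m, d)) (eta : R)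
    (T : set 'rV[R]_d) : Prop :=
  forall x, conv T x -> `| enorm (Papp P x) - enorm x | < eta.

Definition g_lo {R : realType} {d m l : nat} (X : set 'rV[R]_d) (w : 'I_l -> 'rV[R]_d)
    (P : 'M[R]_(m, d)) (eps : R) (z : 'rV[R]_m) (u : 'rV[R]_d) (i : 'I_l) : R :=
  dotv z (Papp P (w i)) - dotv (u - NN X u) (w i) - eps / 30 * enorm (u - NN X u).
Definition g_hi {R : realType} {d m l : nat} (X : set 'rV[R]_d) (w : 'I_l -> 'rV[R]_d)
    (P : 'M[R]_(m, d)) (eps : R) (z : 'rV[R]_m) (u : 'rV[R]_d) (i : 'I_l) : R :=
  dotv (u - NN X u) (w i) - dotv z (Papp P (w i)) - eps / 30 * enorm (u - NN X u).

Definition Ftil {R : realType} {d m l : nat} (X : set 'rV[R]_d) (w : 'I_l -> 'rV[R]_d)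
    (P : 'M[R]_(m, d)) (eps : R) (u : 'rV[R]_d) : set 'rV[R]_m :=
  [set z | forall i, g_lo X w P eps z u i <= 0 /\ g_hi X w P eps z u i <= 0].

Definition beta {R : realType} {d m l : nat} (X : set 'rV[R]_d) (w : 'I_l -> 'rV[R]_d)
    (P : 'M[R]_(m, d)) (eps : R) (u : 'rV[R]_d) : 'rV[R]_m :=
  xget 0 [set z | Ftil X w P eps u z /\ forall z', Ftil X w P eps u z' -> enorm z <= enorm z'].

(* Main.v *)
Require Import Defs.
From HB Require Import structures.
From mathcomp Require Import all_boot all_order all_algebra.
From mathcomp Require Import all_classical all_reals all_analysis.
From mathcomp Require Import ring lra.
Import Order.TTheory GRing.Theory Num.Theory.
Local Open Scope classical_set_scope.
Local Open Scope ring_scope.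
Import numFieldNormedType.Exports.
Set Implicit Arguments. Unset Strict Implicit.

Section E.
Variables (R : realType) (n : nat).
Implicit Types (x y z : 'rV[R]_n) (a t : R).

Lemma dotvC x y : dotv x y = dotv y x.
Proof. by apply: eq_bigr => i _; rewrite mulrC. Qed.
Lemma dotvDl x y z : dotv (x + y) z = dotv x z + dotv y z.
Proof. by rewrite /dotv -big_split; apply: eq_bigr => i _; rewrite mxE mulrDl. Qed.
Lemma dotvZl a x y : dotv (a *: x) y = a * dotv x y.
Proof. by rewrite /dotv mulr_sumr; apply: eq_bigr => i _; rewrite mxE mulrA. Qed.
Lemma dotvNl x y : dotv (- x) y = - dotv x y.
Proof. by rewrite /dotv -sumrN; apply: eq_bigr => i _; rewrite mxE mulNr. Qed.
Lemma dotvBl x y z : dotv (x - y) z = dotv x z - dotv y z.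
Proof. by rewrite dotvDl dotvNl. Qed.
Lemma dotvDr x y z : dotv z (x + y) = dotv z x + dotv z y.
Proof. by rewrite dotvC dotvDl !(dotvC z). Qed.
Lemma dotvZr a x y : dotv y (a *: x) = a * dotv y x.
Proof. by rewrite dotvC dotvZl dotvC. Qed.
Lemma dotvBr x y z : dotv z (x - y) = dotv z x - dotv z y.
Proof. by rewrite dotvC dotvBl !(dotvC z). Qed.
Lemma dotvv_ge0 x : 0 <= dotv x x.
Proof. by apply: sumr_ge0 => i _; rewrite -expr2 sqr_ge0. Qed.
Lemma dotv0l x : dotv 0 x = 0.
Proof. by rewrite /dotv big1 // => i _; rewrite mxE mul0r. Qed.

Lemma dotv_eq0 x : dotv x x = 0 -> x = 0.
Proof.
move=> /eqP; rewrite psumr_eq0; last by move=> i _; rewrite -expr2 sqr_ge0.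
move=> /allP H; apply/rowP => i; rewrite mxE.
have := H i (mem_index_enum _); rewrite /= mulf_eq0 orbb => /eqP //.
Qed.

Lemma CS x y : dotv x y ^+ 2 <= dotv x x * dotv y y.
Proof.
have key t : 0 <= dotv x x - 2 * t * dotv x y + t ^+ 2 * dotv y y.
  have := dotvv_ge0 (x - t *: y).
  rewrite !dotvBl !dotvBr !dotvZl !dotvZr (dotvC y x); lra.
have [Y0|Ypos] := eqVneq (dotv y y) 0.
  by move: (dotv_eq0 Y0) => ->; rewrite dotvC !dotv0l expr0n /= mulr0.
have Yp : 0 < dotv y y by rewrite lt0r Ypos dotvv_ge0.
have := key (dotv x y / dotv y y).
set B := dotv x y; set Y := dotv y y; set X := dotv x x => H.
have e : X - 2 * (B / Y) * B + (B / Y) ^+ 2 * Y = (X * Y - B ^+ 2) / Y.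
  by field; rewrite gt_eqF.
rewrite e in H; rewrite -subr_ge0.
by move: H; rewrite pmulr_lge0 ?invr_gt0.
Qed.

Lemma enorm_ge0 x : 0 <= enorm x. Proof. exact: sqrtr_ge0. Qed.
Lemma enorm2 x : enorm x ^+ 2 = dotv x x.
Proof. by rewrite sqr_sqrtr // dotvv_ge0. Qed.

Lemma CSabs x y : `|dotv x y| <= enorm x * enorm y.
Proof.
rewrite -(ler_pXn2r (n:=2)) // ?nnegrE ?mulr_ge0 ?enorm_ge0 //.
by rewrite exprMn !enorm2 real_normK ?num_real // CS.
Qed.
Lemma CSle x y : dotv x y <= enorm x * enorm y.
Proof. exact: le_trans (ler_norm _) (CSabs x y). Qed.

Lemma enormD x y : enorm (x + y) <= enorm x + enorm y.
Proof.
rewrite -(ler_pXn2r (n:=2)) // ?nnegrE ?addr_ge0 ?enorm_ge0 //.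
rewrite enorm2 dotvDl !dotvDr (dotvC y x) sqrrD !enorm2.
have := CSle x y; lra.
Qed.

Lemma enormZ a x : enorm (a *: x) = `|a| * enorm x.
Proof.
by rewrite /enorm dotvZl dotvZr mulrA -expr2 sqrtrM ?sqr_ge0 // sqrtr_sqr.
Qed.
Lemma enormN x : enorm (- x) = enorm x.
Proof. by rewrite -scaleN1r enormZ normrN normr1 mul1r. Qed.
Lemma enormB x y : enorm (x - y) = enorm (y - x).
Proof. by rewrite -enormN opprB. Qed.
Lemma enorm0 : enorm (0 : 'rV[R]_n) = 0.
Proof. by rewrite /enorm dotv0l sqrtr0. Qed.

Lemma enorm_conv t x y : 0 <= t <= 1 ->
  enorm ((1 - t) *: x + t *: y) <= (1 - t) * enorm x + t * enorm y.
Proof.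
move=> /andP[t0 t1]; apply: le_trans (enormD _ _) _.
by rewrite !enormZ !ger0_norm // subr_ge0.
Qed.
End E.

Section T.
Variables (R : realType).

Lemma cont_sum (T : topologicalType) k (F : 'I_k -> T -> R) :
  (forall i, continuous (F i)) -> continuous (fun z => \sum_(i < k) F i z).
Proof.
move=> H; rewrite -fct_sumE.
apply: (big_ind (fun f : T -> R => continuous f)).
- exact: cst_continuous.
- by move=> f g cf cg x; exact: (cvgD (cf x) (cg x)).
- by move=> i _; apply: H.
Qed.

Lemma cont_dot m (c : 'rV[R]_m) (a k : R) :
  continuous (fun z : 'rV[R]_m => a * dotv z c + k).
Proof.
have h1 : continuous (fun z : 'rV[R]_m => dotv z c).
  apply: (@cont_sum _ m (fun i (z : 'rV[R]_m) => z 0 i * c 0 i)) => i.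
  move=> y; exact: (cvgM (@coord_continuous R 1 m 0 i y) (cvg_cst (c 0 i))).
move=> x.
exact: (cvgD (cvgM (cvg_cst a) (h1 x)) (cvg_cst k)).

Qed.

Lemma cont_dotvv m : continuous (fun z : 'rV[R]_m => dotv z z).
Proof.
apply: (@cont_sum _ m (fun i (z : 'rV[R]_m) => z 0 i * z 0 i)) => i.
by move=> y; exact: (cvgM (@coord_continuous R 1 m 0 i y) (@coord_continuous R 1 m 0 i y)).
Qed.

Lemma closed_le0 (T : topologicalType) (g : T -> R) : continuous g ->
  closed [set z | g z <= 0].
Proof. move=> cg; have := (continuous_closedP g).1 cg _ (@closed_le R 0). done. Qed.

Lemma coord_le m (z : 'rV[R]_m) : `|z| <= Num.sqrt (dotv z z).
Proof.
rewrite /Num.norm /=. rewrite mx_normrE; apply: bigmax_le; first exact: sqrtr_ge0.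
move=> [i j] _ /=.
have -> : i = 0 by apply/val_inj; case: i => [[]].
rewrite -sqrtr_sqr ler_sqrt; last exact: dotvv_ge0.
rewrite /dotv (bigD1 j) //= lerDl sumr_ge0 // => k _.
by rewrite -expr2 sqr_ge0.
Qed.

Lemma min_exists m (F : set 'rV[R]_m) z0 : closed F -> F z0 ->
  exists z, F z /\ forall z', F z' -> enorm z <= enorm z'.
Proof.
move=> Fcl Fz0.
pose A := F `&` [set z | dotv z z - dotv z0 z0 <= 0].
have A0 : A !=set0 by exists z0; split => //=; rewrite subrr.
have Acl : closed A.
  apply: closedI => //; apply: closed_le0 => x.
  exact: (cvgD (@cont_dotvv m x) (cvg_cst _)).
have Abd : bounded_set A.
  exists (Num.sqrt (dotv z0 z0)); split; first exact: num_real.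
  move=> M HM z [_ Hz] /=; apply: (le_trans (coord_le z)).
  apply: ltW; apply: le_lt_trans HM; rewrite ler_sqrt ?dotvv_ge0 //.
  by rewrite -subr_le0.
have Acp : compact A := bounded_closed_compact Abd Acl.
have [c cA cmin] := EVT_min_rV A0 Acp (continuous_subspaceT (@cont_dotvv m)).
move: (cA); rewrite inE => -[Fc Hc].
exists c; split => // z' Fz'; rewrite /enorm ler_sqrt ?dotvv_ge0 //.
have [H|H] := leP (dotv z' z' - dotv z0 z0) 0.
  by apply: cmin; rewrite inE.
rewrite /= in Hc; lra.
Qed.
End T.

Section M.
Variables (R : realType) (d m l : nat) (X : set 'rV[R]_d) (eps : R)
    (w : 'I_l -> 'rV[R]_d) (P : 'M[R]_(m, d)).

Lemma g_lo_conv t x y u i :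
  g_lo X w P eps ((1 - t) *: x + t *: y) u i =
  (1 - t) * g_lo X w P eps x u i + t * g_lo X w P eps y u i.
Proof. by rewrite /g_lo (dotvDl ((1 - t) *: x)) !dotvZl; ring. Qed.

Lemma g_hi_conv t x y u i :
  g_hi X w P eps ((1 - t) *: x + t *: y) u i =
  (1 - t) * g_hi X w P eps x u i + t * g_hi X w P eps y u i.
Proof. by rewrite /g_hi (dotvDl ((1 - t) *: x)) !dotvZl; ring. Qed.

Lemma Ftil_conv u t x y : 0 <= t <= 1 ->
  Ftil X w P eps u x -> Ftil X w P eps u y ->
  Ftil X w P eps u ((1 - t) *: x + t *: y).
Proof.
move=> /andP[t0 t1] Fx Fy i; rewrite g_lo_conv g_hi_conv.
have [hx1 hx2] := Fx i; have [hy1 hy2] := Fy i.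
have t1' : 0 <= 1 - t by rewrite subr_ge0.
split; rewrite -oppr_ge0 opprD -!mulrN; apply: addr_ge0; apply: mulr_ge0 => //;
  by rewrite oppr_ge0.
Qed.

Lemma Ftil_closed u : closed (Ftil X w P eps u).
Proof.
have -> : Ftil X w P eps u = \bigcap_(i in [set: 'I_l])
   ([set z | g_lo X w P eps z u i <= 0] `&` [set z | g_hi X w P eps z u i <= 0]).
  apply/seteqP; split => z /= H.
  - by move=> i _; exact: H i.
  - by move=> i; exact: H i I.
apply: closed_bigI => i _; apply: closedI.
- apply: (@closed_le0 R _ (fun z => g_lo X w P eps z u i)).
  have -> : (fun z => g_lo X w P eps z u i) = (fun z => 1 * dotv z (Papp P (w i)) +
     (- dotv (u - NN X u) (w i) - eps / 30 * enorm (u - NN X u))).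
    by apply/funext => z; rewrite /g_lo; ring.
  exact: cont_dot.
- apply: (@closed_le0 R _ (fun z => g_hi X w P eps z u i)).
  have -> : (fun z => g_hi X w P eps z u i) = (fun z => (-1) * dotv z (Papp P (w i)) +
     (dotv (u - NN X u) (w i) - eps / 30 * enorm (u - NN X u))).
    by apply/funext => z; rewrite /g_hi; ring.
  exact: cont_dot.
Qed.

Lemma betaP u z0 : Ftil X w P eps u z0 ->
  Ftil X w P eps u (beta X w P eps u) /\
  forall z', Ftil X w P eps u z' -> enorm (beta X w P eps u) <= enorm z'.
Proof.
move=> Fz0; have [z [Fz zmin]] := min_exists (Ftil_closed (u:=u)) Fz0.
exact: (@xgetPex _ 0 [set z | Ftil X w P eps u z /\
   forall z', Ftil X w P eps u z' -> enorm z <= enorm z'] (ex_intro _ z (conj Fz zmin))).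
Qed.

End M.

Lemma secant_le1 (R : realType) d (X : set 'rV[R]_d) s :
  unit_secants X s -> enorm s <= 1.
Proof.
move=> Hs; apply/ler_addgt0Pr => e e0.
have [y [x [y' [_ _ _ ->]]] Hy] := Hs e e0.
set k := enorm (x - y').
have ky : enorm (k^-1 *: (x - y')) <= 1.
  rewrite enormZ ger0_norm ?invr_ge0 ?enorm_ge0 //.
  have [->|k0] := eqVneq k 0; first by rewrite invr0 mul0r.
  by rewrite mulVf.
have := enormD (s - k^-1 *: (x - y')) (k^-1 *: (x - y')).
rewrite subrK; lra.
Qed.

Lemma gdiff (R : realType) d m (p q wi : 'rV[R]_d) (z c : 'rV[R]_m) (eps s : R) :
  enorm (p - q) <= 3 * s -> enorm wi <= 1 -> 0 < eps < 1 ->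
  (dotv z c - dotv q wi - eps / 30 * enorm q <=
     dotv z c - dotv p wi - eps / 30 * enorm p + 4 * s) /\
  (dotv q wi - dotv z c - eps / 30 * enorm q <=
     dotv p wi - dotv z c - eps / 30 * enorm p + 4 * s).
Proof.
move=> pq w1 /andP[e0 e1].
have K0 := enorm_ge0 (p - q).
have h1 : dotv (p - q) wi <= 3 * s.
  by apply: le_trans (CSle _ _) _; apply: le_trans (ler_wpM2l K0 w1) _; rewrite mulr1.
have h1' : dotv (q - p) wi <= 3 * s.
  rewrite enormB in pq K0; apply: le_trans (CSle _ _) _.
  by apply: le_trans (ler_wpM2l K0 w1) _; rewrite mulr1.
have h2 : enorm p <= enorm (p - q) + enorm q.
  by have := enormD (p - q) q; rewrite subrK.
have h2' : enorm q <= enorm (q - p) + enorm p.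
  by have := enormD (q - p) p; rewrite subrK.
rewrite enormB in h2'.
rewrite !dotvBl in h1 h1'.
have h3 : eps / 30 * (enorm p - enorm q) <= s / 10 by nra.
have h3' : eps / 30 * (enorm q - enorm p) <= s / 10 by nra.
split; nra.
Qed.

Section Ar.
Variable R : realType.

Lemma ar_zv (d Gb Gz Gv E s : R) : 0 <= d -> d <= 1 -> Gb <= 0 -> Gz <= - E ->
  d * E = 4 * s -> Gv <= (1 - d) * Gb + d * Gz + 4 * s -> Gv <= 0.
Proof.
move=> d0 d1 Gb0 GzE dE H.
have p1 : (1 - d) * Gb <= 0 by apply: mulr_ge0_le0 => //; lra.
have p3 : d * Gz <= - (4 * s) by rewrite -dE -mulrN; apply: ler_wpM2l.
lra.
Qed.

Lemma ar_y (d Gb Gu Gz E s : R) : 0 <= d -> d <= 1 -> Gb <= 0 -> Gu <= Gb + 4 * s ->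
  Gz <= - E -> d * E = 4 * s -> 0 <= s -> (1 - d) * Gu + d * Gz <= 0.
Proof.
move=> d0 d1 Gb0 Gub GzE dE s0.
have p1 : (1 - d) * Gu <= (1 - d) * (4 * s) by apply: ler_wpM2l; lra.
have p3 : d * Gz <= - (4 * s) by rewrite -dE -mulrN; apply: ler_wpM2l.
have p5 : 0 <= d * s by apply: mulr_ge0.
nra.
Qed.

Lemma ar_final (a b Z D ez mm N s eps d : R) :
  0 < eps -> 0 < N -> 0 <= s -> 0 <= a -> 0 <= b -> 0 <= Z -> 0 <= D -> 0 <= ez ->
  a <= ez -> ez <= N -> a <= (1 - d) * b + d * ez -> Z <= (1 - d) * a + d * ez ->
  b <= mm -> D ^+ 2 = 2 * Z ^+ 2 + 2 * b ^+ 2 - 4 * mm ^+ 2 ->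
  0 <= d -> d <= 1 -> d * N = 240 * s / eps -> s <= eps * a / 480 ->
  D <= 128 * Num.sqrt N / Num.sqrt eps * Num.sqrt s.
Proof.
move=> e0 N0 s0 a0 b0 Z0 D0 ez0 aez ezN h3 h4 bmid par d0 d1 dN suvb.
have h5 : D ^+ 2 <= 2 * Z ^+ 2 - 2 * b ^+ 2.
  have : b ^+ 2 <= mm ^+ 2 by rewrite ler_pXn2r // nnegrE //; lra.
  lra.
pose c := 240 * s / eps.
have c0 : 0 <= c by apply: divr_ge0; lra.
have c2a : 2 * c <= a.
  have -> : 2 * c = (480 * s) / eps by rewrite /c; field; rewrite gt_eqF.
  rewrite ler_pdivrMr //.
  by move: suvb; rewrite ler_pdivlMr //; lra.
have dez : d * ez <= c by rewrite /c -dN; apply: ler_wpM2l.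
have da : 0 <= d * a by apply: mulr_ge0.
have db : 0 <= d * b by apply: mulr_ge0.
have Zac : Z <= a + c by lra.
have bac : a - c <= b by lra.
have Z2 : Z ^+ 2 <= (a + c) ^+ 2 by rewrite ler_pXn2r // nnegrE; lra.
have b2 : (a - c) ^+ 2 <= b ^+ 2 by rewrite ler_pXn2r // nnegrE; lra.
have aN : a <= N by lra.
have acN : a * c <= N * c by apply: ler_wpM2r.
have D2 : D ^+ 2 <= 8 * N * c by nra.
have Rge0 : 0 <= 128 * Num.sqrt N / Num.sqrt eps * Num.sqrt s.
  by apply: mulr_ge0; [apply: divr_ge0; [apply: mulr_ge0|]|]; rewrite ?sqrtr_ge0.
rewrite -(ler_pXn2r (n:=2)) // ?nnegrE //.
have -> : (128 * Num.sqrt N / Num.sqrt eps * Num.sqrt s) ^+ 2 = 16384 * N * s / eps.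
  rewrite !exprMn exprVn !sqr_sqrtr; [|lra|lra|lra].
  by field; rewrite gt_eqF.
apply: (le_trans D2); rewrite /c.
have : 0 <= N * s / eps by apply: divr_ge0; [apply: mulr_ge0|]; lra.
have -> : 8 * N * (240 * s / eps) = 1920 * (N * s / eps) by field; rewrite gt_eqF.
have -> : 16384 * N * s / eps = 16384 * (N * s / eps) by field; rewrite gt_eqF.
lra.
Qed.

Lemma parallelogram n (x y : 'rV[R]_n) :
  dotv (x - y) (x - y) = 2 * dotv x x + 2 * dotv y y -
    4 * dotv ((1 - 2^-1) *: x + 2^-1 *: y) ((1 - 2^-1) *: x + 2^-1 *: y).
Proof.
have dNr (p q : 'rV[R]_n) : dotv p (- q) = - dotv p q by rewrite dotvC dotvNl dotvC.
rewrite !dotvDl !dotvDr !dotvNl !dNr !dotvZl !dotvZr (dotvC y x); by field.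
Qed.
End Ar.

Unset Implicit Arguments.
Set Strict Implicit.

Theorem lemma4p7 (R : realType) (d m l : nat) (X : set 'rV[R]_d) (eps : R)
    (w : 'I_l -> 'rV[R]_d) (P : 'M[R]_(m, d)) (u : 'rV[R]_d) (zs : 'rV[R]_m)
    (v : 'rV[R]_d) :
  (0 < reach X)%E ->
  (forall a b, tube X a -> tube X b -> enorm (NN X a - NN X b) <= 2 * enorm (a - b)) ->
  0 < eps < 1 ->
  (forall i, unit_secants X (w i)) ->
  (forall s, unit_secants X s -> exists i, enorm (s - w i) < eps / 40) ->
  hull_distortion P (eps / 240) (unit_secants X) ->
  tube X u -> ~ eclosure X u ->
  enorm zs <= enorm (u - NN X u) ->
  (forall i, g_lo X w P eps zs u i <= - (eps / 60 * enorm (u - NN X u)) /\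
             g_hi X w P eps zs u i <= - (eps / 60 * enorm (u - NN X u))) ->
  beta X w P eps u != 0 ->
  tube X v ->
  enorm (u - v) < Num.min 1 (eps * enorm (u - NN X u) / 480) ->
  enorm (u - v) <= eps * enorm (beta X w P eps u) / 480 ->
  let delta := 240 * enorm (u - v) / (eps * enorm (u - NN X u)) in
  let zv := (1 - delta) *: beta X w P eps u + delta *: zs in
  enorm (zv - beta X w P eps v)
    <= 128 * Num.sqrt (enorm (u - NN X u)) / Num.sqrt eps * Num.sqrt (enorm (u - v)).
Proof.
move=> _ Lip eps01 wsec _ _ tu _ zsN zsg _ tv suv suvb.
cbv zeta.
set delta := 240 * enorm (u - v) / (eps * enorm (u - NN X u)).
set zv := (1 - delta) *: beta X w P eps u + delta *: zs.
have /andP[e0 e1] := eps01.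
set N := enorm (u - NN X u) in zsN zsg suv suvb delta zv *.
set s := enorm (u - v) in suv suvb delta zv *.
set bu := beta X w P eps u in suvb zv *.
set bv := beta X w P eps v.
have s0 : 0 <= s := enorm_ge0 _.
move: suv; rewrite lt_min => /andP[s1 sN].
have N0 : 0 < N.
  rewrite lt0r enorm_ge0 andbT; apply/eqP => N0.
  by move: sN; rewrite N0 mulr0 mul0r; lra.
have eN0 : 0 < eps * N by apply: mulr_gt0.
have ew i : enorm (w i) <= 1 := secant_le1 (wsec i).
have pq : enorm ((u - NN X u) - (v - NN X v)) <= 3 * s.
  have -> : (u - NN X u) - (v - NN X v) = (u - v) + - (NN X u - NN X v).
    by apply/rowP => j; rewrite !mxE; ring.
  apply: le_trans (enormD _ _) _; rewrite enormN.
  by have := Lip u v tu tv; rewrite -/s; lra.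
have pq' : enorm ((v - NN X v) - (u - NN X u)) <= 3 * s by rewrite enormB.
have tr_uv z i : g_lo X w P eps z v i <= g_lo X w P eps z u i + 4 * s /\
                 g_hi X w P eps z v i <= g_hi X w P eps z u i + 4 * s.
  exact: (gdiff z (Papp P (w i)) pq (ew i) eps01).
have tr_vu z i : g_lo X w P eps z u i <= g_lo X w P eps z v i + 4 * s /\
                 g_hi X w P eps z u i <= g_hi X w P eps z v i + 4 * s.
  exact: (gdiff z (Papp P (w i)) pq' (ew i) eps01).
clear pq pq' Lip.
have zsF : Ftil X w P eps u zs.
  move=> i; have [h1 h2] := zsg i.
  have h3 : 0 <= eps / 60 * N by rewrite mulr_ge0 ?divr_ge0 ?(ltW e0) ?(ltW N0).
  by split; [apply: le_trans h1 _ | apply: le_trans h2 _]; rewrite oppr_le0.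
have [buF bumin] := betaP zsF.
have d0 : 0 <= delta by rewrite /delta; apply: divr_ge0; [lra | exact: ltW].
have dN : delta * N = 240 * s / eps.
  by rewrite /delta; field; rewrite gt_eqF // gt_eqF.
have d1 : delta <= 1.
  rewrite /delta ler_pdivrMr //; lra.
have key : delta * (eps / 60 * N) = 4 * s.
  rewrite mulrA (mulrC delta) -mulrA dN; field; rewrite gt_eqF //.
have zvF : Ftil X w P eps v zv.
  move=> i; have [t1 t2] := tr_uv zv i.
  rewrite /zv [X in _ <= X + _]g_lo_conv in t1; rewrite [X in _ <= X + _]g_hi_conv in t2.
  have [b1 b2] := buF i; have [z1 z2] := zsg i.
  by split; [apply: (ar_zv d0 d1 b1 z1 key t1) | apply: (ar_zv d0 d1 b2 z2 key t2)].
have [bvF bvmin] := betaP zvF.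
pose y := (1 - delta) *: bv + delta *: zs.
have yF : Ftil X w P eps u y.
  move=> i; have [t1 t2] := tr_vu bv i.
  rewrite /y g_lo_conv g_hi_conv.
  have [b1 b2] := bvF i; have [z1 z2] := zsg i.
  by split; [apply: (ar_y d0 d1 b1 t1 z1 key s0) | apply: (ar_y d0 d1 b2 t2 z2 key s0)].
pose mid := (1 - 2^-1) *: zv + 2^-1 *: bv.
have midF : Ftil X w P eps v mid.
  apply: Ftil_conv => //; apply/andP; split.
  - by rewrite invr_ge0 ler0n.
  - by rewrite invf_le1 // ?ler1n // ltr0n.
have h3 : enorm bu <= (1 - delta) * enorm bv + delta * enorm zs.
  apply: le_trans (bumin _ yF) _; apply: enorm_conv; apply/andP; split => //.
have h4 : enorm zv <= (1 - delta) * enorm bu + delta * enorm zs.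
  by apply: enorm_conv; apply/andP; split.
have par : enorm (zv - bv) ^+ 2 =
    2 * enorm zv ^+ 2 + 2 * enorm bv ^+ 2 - 4 * enorm mid ^+ 2.
  by rewrite !enorm2 parallelogram.
exact: (ar_final e0 N0 s0 (enorm_ge0 _) (enorm_ge0 _) (enorm_ge0 _) (enorm_ge0 _)
  (enorm_ge0 _) (bumin _ zsF) zsN h3 h4 (bvmin _ midF) par d0 d1 dN suvb).
Qed.
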